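(* In the discrete scheme described in the context, let $M'=\max_j|\theta^n_j|+\max_j|q^n_j|$. There is a constant $C>0$ depending only on $M'$, $T$ and $Q^{sat}$ such that for all $s<t$ in $[0,T)$ and all $z\in[0,1)$, $$(F^n(t,z)-F^n(s,z))^+\le C\big(\hat\theta^n(t,z)-\hat\theta^n(s,z)\big).$$
   Context: $Q^{sat}:\mathbb{R}^3\to\mathbb{R}$ is smooth with $\partial_\theta Q^{sat}>0$, $\partial_zQ^{sat}<0$. $\Theta(w,z,t)$ is the solution $\theta$ of $\theta+Q^{sat}(\theta,z,t)=w$ (assumed well defined), with $\partial_w\Theta>0$, $\partial_z\Theta>0$. Discrete scheme. Fix $T>0$, $n\ge1$, $\delta t>0$, $z_i=i/n$, $J_i=[\frac{i-1}n,\frac in)$. There are $n$ parcels $j=1,\dots,n$; initially parcel $j$ is at position $j$ with value $\theta^n_j$, where $\theta^n_1\le\dots\le\theta^n_n$ and $q^n_j\le Q^{sat}(\theta^n_j,z_j,0)$; parcel $j$ carries the fixed number $\theta^M_j=\theta^n_j+q^n_j$. One time step from $k\delta t$ to $(k+1)\delta t$, with $\tau=(k+1)\delta t$: positions $m=n,\dots,1$ are processed in this order. At stage $m$, with current configuration (parcel $p(i)$ at position $i$ with value $\vartheta_i$), position $i$ is wet if $\vartheta_i<\Theta(\theta^M_{p(i)},z_i,\tau)$; a wet position $i_0\le m$ is eligible if for every $i$ with $i_0<i\le m$, either $i$ is not wet and $\vartheta_i<\Theta(\theta^M_{p(i_0)},z_i,\tau)$, or $i$ is wet and $\theta^M_{p(i_0)}>\theta^M_{p(i)}$.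 If some position is eligible, let $i_*$ be the eligible position whose parcel has the largest $\theta^M$ (largest position in case of ties); that parcel moves to position $m$ with new value $\Theta(\theta^M_{p(i_* )},z_m,\tau)$, the parcels at $i_*+1,\dots,m$ move down one position keeping their values, others unchanged; otherwise nothing changes. After stage $1$ one has the configuration at time $(k+1)\delta t$. $\alpha_{k\delta t}(j)$ is the position of parcel $j$ after $k$ steps, $\theta^n_i(k\delta t)$ the value at position $i$. For $k\delta t\le t<(k+1)\delta t$ and $z\in J_j$: $\theta^n(t,z)=\theta^n_j(k\delta t)$, $F^n(t,z)=z-z_j+z_{\alpha_{k\delta t}(j)}$, and $\hat\theta^n(t,z)=\theta^n(t,F^n(t,z))$. *)

(* Defs.v *)
From Stdlib Require Import Reals Lra Lia List Arith.
From Coquelicot Require Import Coquelicot.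
Import ListNotations.
Open Scope bool_scope.
Open Scope R_scope.

Definition cont3 (f : R -> R -> R -> R) : Prop :=
  forall x y w : R,
    continuous (fun p : R * R * R => f (fst (fst p)) (snd (fst p)) (snd p)) (x, y, w).

Fixpoint Ck (k : nat) (f : R -> R -> R -> R) : Prop :=
  match k with
  | O => cont3 f
  | S k' => cont3 f /\
      exists f1 f2 f3 : R -> R -> R -> R,
        (forall x y w, is_derive (fun a => f a y w) x (f1 x y w)) /\
        (forall x y w, is_derive (fun a => f x a w) y (f2 x y w)) /\
        (forall x y w, is_derive (fun a => f x y a) w (f3 x y w)) /\
        Ck k' f1 /\ Ck k' f2 /\ Ck k' f3
  end.

Definition smooth3 (f : R -> R -> R -> R) : Prop := forall k, Ck k f.

(* positions are 1..n ; z_i = i/n *)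
Definition zpos (n i : nat) : R := INR i / INR n.

(* configuration: par i = parcel at position i, val i = value at position i *)
Record config := mkcfg { par : nat -> nat; val : nat -> R }.

Definition ltbR (x y : R) : bool := if Rlt_dec x y then true else false.

Section Scheme.
Variables (Theta : R -> R -> R -> R) (n : nat) (dt : R) (th0 q : nat -> R).

Definition thM (j : nat) : R := th0 j + q j.

Definition wet (tau : R) (c : config) (i : nat) : bool :=
  ltbR (val c i) (Theta (thM (par c i)) (zpos n i) tau).

Definition eligible (tau : R) (c : config) (m i0 : nat) : bool :=
  wet tau c i0 &&
  forallb (fun i =>
     (negb (wet tau c i) && ltbR (val c i) (Theta (thM (par c i0)) (zpos n i) tau))
     || (wet tau c i && ltbR (thM (par c i)) (thM (par c i0))))
    (seq (S i0) (m - i0)).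

(* eligible position with largest theta^M, ties broken by largest position *)
Definition select (tau : R) (c : config) (m : nat) : option nat :=
  fold_left (fun acc i =>
     if eligible tau c m i then
       match acc with
       | None => Some i
       | Some j => if Rle_dec (thM (par c j)) (thM (par c i)) then Some i else acc
       end
     else acc) (seq 1 m) None.

Definition move (c : config) (istar m : nat) (newv : R) : config :=
  mkcfg
    (fun i => if orb (i <? istar)%nat (m <? i)%nat then par c i
              else if (i =? m)%nat then par c istar else par c (S i))
    (fun i => if orb (i <? istar)%nat (m <? i)%nat then val c i
              else if (i =? m)%nat then newv else val c (S i)).

Definition stage (tau : R) (c : config) (m : nat) : config :=
  match select tau c m with
  | None => c
  | Some is => move c is m (Theta (thM (par c is)) (zpos n m) tau)
  end.

Fixpoint run_stages (tau : R) (c : config) (m : nat) : config :=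
  match m with
  | O => c
  | S m' => run_stages tau (stage tau c (S m')) m'
  end.

Definition init_cfg : config := mkcfg (fun i => i) th0.

Fixpoint cfg_at (k : nat) : config :=
  match k with
  | O => init_cfg
  | S k' => run_stages (INR (S k') * dt) (cfg_at k') n
  end.

Definition alpha (c : config) (j : nat) : nat :=
  fold_right (fun i acc => if (par c i =? j)%nat then i else acc) O (seq 1 n).

Definition kidx (t : R) : nat := Z.to_nat (Int_part (t / dt)).

(* index j with z in J_j = [(j-1)/n, j/n) *)
Definition cell (z : R) : nat := S (Z.to_nat (Int_part (INR n * z))).

Definition theta_n (t z : R) : R := val (cfg_at (kidx t)) (cell z).

Definition F_n (t z : R) : R :=
  z - zpos n (cell z) + zpos n (alpha (cfg_at (kidx t)) (cell z)).

Definition theta_hat (t z : R) : R := theta_n t (F_n t z).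

Definition Mprime : R :=
  fold_right Rmax 0 (map (fun j => Rabs (th0 j)) (seq 1 n))
  + fold_right Rmax 0 (map (fun j => Rabs (q j)) (seq 1 n)).

End Scheme.

(* Main.v *)
Require Import Defs.
From Stdlib Require Import Reals Lra Lia List ZArith ClassicalEpsilon Classical.
From Coquelicot Require Import Coquelicot.
Open Scope R_scope.

Lemma cont3_eps (g : R -> R -> R -> R) (Hg : cont3 g) x y w (eps : posreal) :
  exists d : posreal, forall x' y' w', Rabs (x' - x) < d -> Rabs (y' - y) < d ->
    Rabs (w' - w) < d -> Rabs (g x' y' w' - g x y w) < eps.
Proof.
  pose proof (Hg x y w) as H.
  destruct (H (ball (g x y w) eps) (locally_ball _ eps)) as [d Hd].
  exists d. intros x' y' w' h1 h2 h3.
  pose proof (Hd (x', y', w') (conj (conj h1 h2) h3)) as K. exact K.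
Qed.

Definition inbox (a1 b1 a2 b2 a3 b3 x y w : R) : Prop :=
  a1 <= x <= b1 /\ a2 <= y <= b2 /\ a3 <= w <= b3.

Lemma box_cover (g : R -> R -> R -> R) (Hg : cont3 g) a1 b1 a2 b2 a3 b3
  (eps : R -> R -> R -> posreal) :
  exists l : list (R * R * R),
    (forall t, In t l -> inbox a1 b1 a2 b2 a3 b3 (fst (fst t)) (snd (fst t)) (snd t)) /\
    forall x y w, inbox a1 b1 a2 b2 a3 b3 x y w ->
      exists t, In t l /\
        Rabs (g x y w - g (fst (fst t)) (snd (fst t)) (snd t))
          < eps (fst (fst t)) (snd (fst t)) (snd t).
Proof.
  set (dl := fun (t : Compactness.Tn 3 R) =>
    match t with (t1, (t2, (t3, _))) =>
      proj1_sig (constructive_indefinite_description _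
        (cont3_eps g Hg t1 t2 t3 (eps t1 t2 t3))) end).
  pose proof (Compactness.compactness_list 3 (a1, (a2, (a3, tt))) (b1, (b2, (b3, tt))) dl) as H.
  apply NNPP; intro Hn; apply H; intros [l Hl]; apply Hn; clear H Hn.
  set (conv := fun (t : Compactness.Tn 3 R) =>
    match t with (t1, (t2, (t3, _))) => (t1, t2, t3) end).
  exists (map conv (filter (fun t => match t with (t1, (t2, (t3, _))) =>
      if Rle_dec a1 t1 then if Rle_dec t1 b1 then if Rle_dec a2 t2 then if Rle_dec t2 b2 then
      if Rle_dec a3 t3 then if Rle_dec t3 b3 then true else false else false else false else false
      else false else false end) l)).
  split.
  - intros t Ht. apply in_map_iff in Ht. destruct Ht as [[t1 [t2 [t3 []]]] [<- Ht]].
    apply filter_In in Ht. destruct Ht as [_ Ht]. simpl.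
    unfold inbox.
    repeat match goal with H : context [Rle_dec ?a ?b] |- _ => destruct (Rle_dec a b) end;
    try discriminate; lra.
  - intros x y w Hb. destruct (Hl (x, (y, (w, tt)))) as [[t1 [t2 [t3 []]]] [Hin [Hbt Hc]]].
    { unfold inbox in Hb. simpl. tauto. }
    exists (t1, t2, t3). split.
    + apply in_map_iff. exists (t1, (t2, (t3, tt))). split; [reflexivity|].
      apply filter_In. split; [exact Hin|]. simpl in Hbt.
      repeat match goal with |- context [Rle_dec ?a ?b] => destruct (Rle_dec a b) end;
      try reflexivity; lra.
    + simpl in Hc. simpl. unfold dl in Hc.
      destruct (constructive_indefinite_description _ (cont3_eps g Hg t1 t2 t3 (eps t1 t2 t3))) as [d Hd].
      simpl in Hc. destruct Hc as [c1 [c2 [c3 _]]]. apply Hd; assumption.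
Qed.

Lemma list_max_bound (f : R * R * R -> R) (l : list (R * R * R)) :
  exists K, forall t, In t l -> f t <= K.
Proof.
  induction l as [|a l [K HK]].
  - exists 0. intros t [].
  - exists (Rmax (f a) K). intros t [<-|Ht].
    + apply Rmax_l.
    + eapply Rle_trans; [apply HK; exact Ht| apply Rmax_r].
Qed.

Lemma list_min_pos (f : R * R * R -> R) (l : list (R * R * R)) :
  (forall t, In t l -> 0 < f t) -> exists m, 0 < m /\ forall t, In t l -> m <= f t.
Proof.
  induction l as [|a l IH]; intros H.
  - exists 1. split; [lra| intros t []].
  - destruct IH as [m [Hm HK]]. { intros t Ht; apply H; right; exact Ht. }
    exists (Rmin (f a) m). split.
    + apply Rmin_glb_lt; [apply H; left; reflexivity| exact Hm].
    + intros t [<-|Ht].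
      * apply Rmin_l.
      * eapply Rle_trans; [apply Rmin_r| apply HK; exact Ht].
Qed.

Lemma box_bound (g : R -> R -> R -> R) (Hg : cont3 g) a1 b1 a2 b2 a3 b3 :
  exists K, forall x y w, inbox a1 b1 a2 b2 a3 b3 x y w -> Rabs (g x y w) <= K.
Proof.
  destruct (box_cover g Hg a1 b1 a2 b2 a3 b3 (fun _ _ _ => mkposreal 1 Rlt_0_1)) as [l [_ Hl]].
  destruct (list_max_bound (fun t => Rabs (g (fst (fst t)) (snd (fst t)) (snd t))) l) as [K HK].
  exists (K + 1). intros x y w Hb. destruct (Hl x y w Hb) as [t [Ht Hc]].
  simpl in Hc. pose proof (HK t Ht) as H1. simpl in H1.
  pose proof (Rabs_triang_inv (g x y w) (g (fst (fst t)) (snd (fst t)) (snd t))). lra.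
Qed.

Lemma pos_half_or_one (r : R) : 0 < (if Rlt_dec 0 r then r / 2 else 1).
Proof. destruct (Rlt_dec 0 r); lra. Qed.

Lemma box_pos (g : R -> R -> R -> R) (Hg : cont3 g) a1 b1 a2 b2 a3 b3 :
  (forall x y w, inbox a1 b1 a2 b2 a3 b3 x y w -> 0 < g x y w) ->
  exists m, 0 < m /\ forall x y w, inbox a1 b1 a2 b2 a3 b3 x y w -> m <= g x y w.
Proof.
  intros Hpos.
  destruct (box_cover g Hg a1 b1 a2 b2 a3 b3
     (fun x y w => mkposreal _ (pos_half_or_one (g x y w)))) as [l [Hl1 Hl]].
  destruct (list_min_pos (fun t => g (fst (fst t)) (snd (fst t)) (snd t) / 2) l) as [m [Hm HK]].
  { intros t Ht. pose proof (Hpos _ _ _ (Hl1 t Ht)). lra. }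
  exists m. split; [exact Hm|]. intros x y w Hb. destruct (Hl x y w Hb) as [t [Ht Hc]].
  simpl in Hc. pose proof (HK t Ht) as H1. simpl in H1.
  pose proof (Hpos _ _ _ (Hl1 t Ht)) as H2.
  destruct (Rlt_dec 0 (g (fst (fst t)) (snd (fst t)) (snd t))); [|lra].
  apply Rabs_def2 in Hc. lra.
Qed.

Lemma neg_half_or_one (r : R) : 0 < (if Rlt_dec r 0 then - r / 2 else 1).
Proof. destruct (Rlt_dec r 0); lra. Qed.

Lemma box_neg (g : R -> R -> R -> R) (Hg : cont3 g) a1 b1 a2 b2 a3 b3 :
  (forall x y w, inbox a1 b1 a2 b2 a3 b3 x y w -> g x y w < 0) ->
  exists m, 0 < m /\ forall x y w, inbox a1 b1 a2 b2 a3 b3 x y w -> g x y w <= - m.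
Proof.
  intros Hpos.
  destruct (box_cover g Hg a1 b1 a2 b2 a3 b3
     (fun x y w => mkposreal _ (neg_half_or_one (g x y w)))) as [l [Hl1 Hl]].
  destruct (list_min_pos (fun t => - g (fst (fst t)) (snd (fst t)) (snd t) / 2) l) as [m [Hm HK]].
  { intros t Ht. pose proof (Hpos _ _ _ (Hl1 t Ht)). lra. }
  exists m. split; [exact Hm|]. intros x y w Hb. destruct (Hl x y w Hb) as [t [Ht Hc]].
  simpl in Hc. pose proof (HK t Ht) as H1. simpl in H1.
  pose proof (Hpos _ _ _ (Hl1 t Ht)) as H2.
  destruct (Rlt_dec (g (fst (fst t)) (snd (fst t)) (snd t)) 0); [|lra].
  apply Rabs_def2 in Hc. lra.
Qed.

Lemma mvt_glob (h dh : R -> R) (Hd : forall x, is_derive h x (dh x)) (a b : R) :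
  exists c, Rmin a b <= c <= Rmax a b /\ h b - h a = dh c * (b - a).
Proof.
  destruct (MVT_gen h a b dh) as [c [Hc1 Hc2]].
  - intros x _. apply Hd.
  - intros x _. apply continuity_pt_filterlim.
    apply (@ex_derive_continuous R_AbsRing R_NormedModule h x).
    exists (dh x). apply Hd.
  - exists c. split; assumption.
Qed.

Lemma theta_lip (Q Theta : R -> R -> R -> R)
  (HQ : smooth3 Q)
  (HQth : forall th z t, Derive (fun a => Q a z t) th > 0)
  (HQz : forall th z t, Derive (fun a => Q th a t) z < 0)
  (HTheta : forall w z t, Theta w z t + Q (Theta w z t) z t = w)
  (T M' : R) :
  exists k, 0 < k /\ forall w z1 z2 tau, Rabs w <= M' -> 0 <= z1 <= z2 -> z2 <= 1 ->
    0 <= tau <= T -> k * (z2 - z1) <= Theta w z2 tau - Theta w z1 tau.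
Proof.
  destruct (HQ 1%nat) as [HQc [f1 [f2 [f3 [D1 [D2 [D3 [C1 [C2 C3]]]]]]]]].
  simpl in C1, C2.
  assert (Hf1 : forall x y w, 0 < f1 x y w).
  { intros x y w. rewrite <- (is_derive_unique _ _ _ (D1 x y w)). apply HQth. }
  assert (Hf2 : forall x y w, f2 x y w < 0).
  { intros x y w. rewrite <- (is_derive_unique _ _ _ (D2 x y w)). apply HQz. }
  destruct (box_bound Q HQc 0 0 0 1 0 T) as [K0 HK0].
  set (B := Rabs M' + K0).
  assert (HB : forall w y tau, Rabs w <= M' -> 0 <= y <= 1 -> 0 <= tau <= T ->
            - B <= Theta w y tau <= B).
  { intros w y tau Hw Hy Ht.
    set (th := Theta w y tau).
    destruct (mvt_glob (fun a => Q a y tau) (fun a => f1 a y tau) (fun x => D1 x y tau) 0 th)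
      as [e [_ He]].
    pose proof (HTheta w y tau) as E. fold th in E. simpl in He.
    pose proof (HK0 0 y tau (conj (conj (Rle_refl 0) (Rle_refl 0)) (conj Hy Ht))) as Hq.
    pose proof (Hf1 e y tau) as Hp.
    pose proof (Rle_abs M'). pose proof (Rle_abs w). pose proof (Rle_abs (-w)).
    rewrite Rabs_Ropp in *.
    pose proof (Rle_abs (Q 0 y tau)). pose proof (Rle_abs (- Q 0 y tau)). rewrite Rabs_Ropp in *.
    unfold B.
    destruct (Rle_dec 0 th).
    - assert (0 <= th * f1 e y tau) by (apply Rmult_le_pos; lra). nra.
    - assert (0 <= (- th) * f1 e y tau) by (apply Rmult_le_pos; lra). nra. }
  destruct (box_neg f2 C2 (-B) B 0 1 0 T) as [m2 [Hm2 Hm2b]].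
  { intros; apply Hf2. }
  destruct (box_bound f1 C1 (-B) B 0 1 0 T) as [L HL].
  exists (m2 / (1 + Rabs L)). split.
  { pose proof (Rabs_pos L). apply Rdiv_lt_0_compat; lra. }
  intros w z1 z2 tau Hw Hz Hz2 Ht.
  set (a := Theta w z1 tau). set (b := Theta w z2 tau).
  pose proof (HB w z1 tau Hw ltac:(lra) Ht) as Ha. fold a in Ha.
  pose proof (HB w z2 tau Hw ltac:(lra) Ht) as Hb. fold b in Hb.
  pose proof (HTheta w z1 tau) as Ea. fold a in Ea.
  pose proof (HTheta w z2 tau) as Eb. fold b in Eb.
  destruct (mvt_glob (fun y => Q a y tau) (fun y => f2 a y tau) (fun y => D2 a y tau) z1 z2)
    as [zeta [Hzeta Ez]].
  destruct (mvt_glob (fun x => Q x z2 tau) (fun x => f1 x z2 tau) (fun x => D1 x z2 tau) a b)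
    as [eta [Heta Et]].
  simpl in Ez, Et.
  rewrite Rmin_left in Hzeta by lra. rewrite Rmax_right in Hzeta by lra.
  assert (Hmin : -B <= Rmin a b) by (apply Rmin_glb; lra).
  assert (Hmax : Rmax a b <= B) by (apply Rmax_lub; lra).
  pose proof (Hm2b a zeta tau ltac:(unfold inbox; repeat split; lra)) as G.
  pose proof (HL eta z2 tau ltac:(unfold inbox; repeat split; lra)) as F.
  pose proof (Hf1 eta z2 tau) as Fp.
  pose proof (Rle_abs (f1 eta z2 tau)).
  set (F1 := f1 eta z2 tau) in *. set (G2 := f2 a zeta tau) in *.
  assert (E : (1 + F1) * (b - a) = - G2 * (z2 - z1)) by lra.
  assert (Hd : 0 <= z2 - z1) by lra.
  assert (H1 : m2 * (z2 - z1) <= (1 + F1) * (b - a)) by (rewrite E; nra).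
  assert (Hba : 0 <= b - a).
  { destruct (Rle_dec 0 (b - a)); [assumption|].
    assert ((1 + F1) * (b - a) < 0) by (apply Rmult_pos_neg; lra).
    assert (0 <= m2 * (z2 - z1)) by (apply Rmult_le_pos; lra). lra. }
  assert (H3 : (1 + F1) * (b - a) <= (1 + Rabs L) * (b - a)).
  { pose proof (Rle_abs L). apply Rmult_le_compat_r; lra. }
  assert (H2 : m2 * (z2 - z1) <= (1 + Rabs L) * (b - a)) by lra.
  pose proof (Rabs_pos L).
  apply (Rmult_le_reg_l (1 + Rabs L)); [lra|].
  replace ((1 + Rabs L) * (m2 / (1 + Rabs L) * (z2 - z1))) with (m2 * (z2 - z1)) by (field; lra). lra.
Qed.

Definition Perm (n : nat) (c : config) : Prop :=
  (forall i, (1 <= i <= n)%nat -> (1 <= par c i <= n)%nat) /\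
  (forall i1 i2, (1 <= i1 <= n)%nat -> (1 <= i2 <= n)%nat -> par c i1 = par c i2 -> i1 = i2) /\
  (forall p, (1 <= p <= n)%nat -> exists i, (1 <= i <= n)%nat /\ par c i = p).

Definition Rel (n : nat) (k : R) (c1 c2 : config) : Prop :=
  forall i1 i2, (1 <= i1 <= n)%nat -> (1 <= i2 <= n)%nat -> par c1 i1 = par c2 i2 ->
    Rmax 0 (k * (zpos n i2 - zpos n i1)) <= val c2 i2 - val c1 i1.

Lemma Rel_refl n k c : Perm n c -> Rel n k c c.
Proof.
  intros [_ [Hi _]] i1 i2 H1 H2 E. rewrite (Hi _ _ H1 H2 E).
  replace (k * (zpos n i2 - zpos n i2)) with 0 by ring.
  rewrite Rmax_left; lra.
Qed.

Lemma Rmax0_add a b : Rmax 0 (a + b) <= Rmax 0 a + Rmax 0 b.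
Proof. unfold Rmax; repeat destruct Rle_dec; lra. Qed.

Lemma Rel_trans n k c1 c2 c3 : Perm n c1 -> Perm n c2 -> Rel n k c1 c2 -> Rel n k c2 c3 -> Rel n k c1 c3.
Proof.
  intros [Hr1 _] [_ [_ Hs2]] R12 R23 i1 i3 H1 H3 E.
  destruct (Hs2 (par c1 i1) (Hr1 _ H1)) as [i2 [H2 E2]].
  pose proof (R12 i1 i2 H1 H2 (eq_sym E2)).
  pose proof (R23 i2 i3 H2 H3 (eq_trans E2 E)).
  replace (k * (zpos n i3 - zpos n i1)) with (k * (zpos n i2 - zpos n i1) + k * (zpos n i3 - zpos n i2)) by ring.
  pose proof (Rmax0_add (k * (zpos n i2 - zpos n i1)) (k * (zpos n i3 - zpos n i2))). lra.
Qed.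

Definition sig (is m i : nat) : nat :=
  if orb (i <? is)%nat (m <? i)%nat then i else if (i =? m)%nat then is else S i.

Lemma move_par c is m v i : par (move c is m v) i = par c (sig is m i).
Proof. unfold move, sig; simpl. destruct (_ || _)%bool; [|destruct (_ =? _)%nat]; reflexivity. Qed.

Ltac sigcase is m i :=
  unfold sig; destruct (Nat.ltb_spec i is), (Nat.ltb_spec m i), (Nat.eqb_spec i m); simpl.

Lemma sig_range n is m i : (1 <= is)%nat -> (is <= m)%nat -> (m <= n)%nat -> (1 <= i <= n)%nat ->
  (1 <= sig is m i <= n)%nat.
Proof. intros. sigcase is m i; lia. Qed.

Lemma sig_inj n is m i1 i2 : (1 <= is)%nat -> (is <= m)%nat -> (m <= n)%nat ->
  (1 <= i1 <= n)%nat -> (1 <= i2 <= n)%nat -> sig is m i1 = sig is m i2 -> i1 = i2.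
Proof. intros. revert H4. sigcase is m i1; sigcase is m i2; lia. Qed.

Lemma sig_surj n is m i0 : (1 <= is)%nat -> (is <= m)%nat -> (m <= n)%nat -> (1 <= i0 <= n)%nat ->
  exists i, (1 <= i <= n)%nat /\ sig is m i = i0.
Proof.
  intros.
  destruct (Nat.lt_ge_cases i0 is).
  { exists i0. split; [lia|]. sigcase is m i0; lia. }
  destruct (Nat.lt_ge_cases m i0).
  { exists i0. split; [lia|]. sigcase is m i0; lia. }
  destruct (Nat.eq_dec i0 is).
  { exists m. split; [lia|]. sigcase is m m; lia. }
  exists (i0 - 1)%nat. split; [lia|]. sigcase is m (i0 - 1)%nat; lia.
Qed.

Lemma move_perm n c is m v : Perm n c -> (1 <= is)%nat -> (is <= m)%nat -> (m <= n)%nat ->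
  Perm n (move c is m v).
Proof.
  intros [Hr [Hi Hs]] Ha Hb Hc. split; [|split].
  - intros i Hii. rewrite move_par. apply Hr. apply sig_range; auto.
  - intros i1 i2 K1 K2. rewrite !move_par. intros E.
    apply Hi in E; try (apply sig_range; auto).
    eapply sig_inj; eauto.
  - intros p Hp. destruct (Hs p Hp) as [i0 [Hi0 E]].
    destruct (sig_surj n is m i0) as [i [Hi' E']]; auto.
    exists i. split; auto. rewrite move_par, E'. exact E.
Qed.

Lemma ltbR_true x y : ltbR x y = true -> x < y.
Proof. unfold ltbR. destruct (Rlt_dec x y); [auto|discriminate]. Qed.

Lemma select_spec Theta n th0 q tau c m is :
  select Theta n th0 q tau c m = Some is ->
  (1 <= is <= m)%nat /\ eligible Theta n th0 q tau c m is = true.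
Proof.
  unfold select. intros H.
  match type of H with fold_left ?F ?l ?a = _ =>
    assert (G : forall l0 acc, (forall i, In i l0 -> (1 <= i <= m)%nat) ->
       (forall j, acc = Some j -> (1 <= j <= m)%nat /\ eligible Theta n th0 q tau c m j = true) ->
       forall j, fold_left F l0 acc = Some j ->
         (1 <= j <= m)%nat /\ eligible Theta n th0 q tau c m j = true) end.
  { induction l0 as [|a l0 IH]; simpl; intros acc Hl Hacc j Hj.
    - apply Hacc; exact Hj.
    - refine (IH _ (fun i Hi => Hl i (or_intror Hi)) _ j Hj).
      destruct (eligible Theta n th0 q tau c m a) eqn:E.
      + destruct acc as [j'|].
        * destruct (Rle_dec _ _); intros j0 Hj0; inversion Hj0; subst.
          -- split; [apply Hl; left; reflexivity| exact E].
          -- apply Hacc; reflexivity.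
        * intros j0 Hj0; inversion Hj0; subst. split; [apply Hl; left; reflexivity| exact E].
      + exact Hacc. }
  apply (G (seq 1 m) None) ; [| intros j Hj; discriminate | exact H].
  intros i Hi. apply in_seq in Hi. lia.
Qed.

Lemma zpos_le n i j : (1 <= n)%nat -> (i <= j)%nat -> zpos n i <= zpos n j.
Proof.
  intros Hn Hij. unfold zpos, Rdiv. apply Rmult_le_compat_r.
  - left. apply Rinv_0_lt_compat. apply lt_0_INR. lia.
  - apply le_INR. exact Hij.
Qed.

Definition Pgood Theta n th0 q (k tau : R) : Prop :=
  forall p i1 i2, (1 <= p <= n)%nat -> (1 <= i1)%nat -> (i1 <= i2)%nat -> (i2 <= n)%nat ->
    k * (zpos n i2 - zpos n i1) <=
    Theta (thM th0 q p) (zpos n i2) tau - Theta (thM th0 q p) (zpos n i1) tau.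

Lemma stage_ok Theta n th0 q k tau c m :
  (1 <= n)%nat -> 0 < k -> Pgood Theta n th0 q k tau -> Perm n c -> (1 <= m <= n)%nat ->
  Rel n k c (stage Theta n th0 q tau c m) /\ Perm n (stage Theta n th0 q tau c m).
Proof.
  intros Hn Hk HP Hc Hm. unfold stage.
  destruct (select Theta n th0 q tau c m) as [is|] eqn:Hs.
  2: { split; [apply Rel_refl|]; exact Hc. }
  apply select_spec in Hs. destruct Hs as [Hr He].
  unfold eligible in He. apply andb_prop in He. destruct He as [Hw _].
  unfold wet in Hw. apply ltbR_true in Hw.
  split; [|apply move_perm; auto; lia].
  destruct Hc as [Hcr [Hci Hcs]].
  intros i1 i2 H1 H2 E. rewrite move_par in E.
  assert (Hsr : (1 <= sig is m i2 <= n)%nat) by (apply sig_range; lia).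
  pose proof (Hci _ _ H1 Hsr E) as Ei. subst i1.
  unfold move; simpl. revert Hsr H1 E.
  unfold sig; destruct (Nat.ltb_spec i2 is), (Nat.ltb_spec m i2), (Nat.eqb_spec i2 m); simpl;
    intros Hsr H1 E; try lia;
    try (replace (k * (zpos n i2 - zpos n i2)) with 0 by ring; rewrite Rmax_left; lra).
  - subst i2. pose proof (HP (par c is) is m (Hcr is ltac:(lia)) ltac:(lia) ltac:(lia) ltac:(lia)).
    pose proof (zpos_le n is m Hn ltac:(lia)).
    rewrite Rmax_right.
    + lra.
    + apply Rmult_le_pos; lra.
  - pose proof (zpos_le n i2 (S i2) Hn ltac:(lia)).
    rewrite Rmax_left.
    + lra.
    + assert (0 <= k * (zpos n (S i2) - zpos n i2)) by (apply Rmult_le_pos; lra). lra.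
Qed.

Lemma run_ok Theta n th0 q k tau :
  (1 <= n)%nat -> 0 < k -> Pgood Theta n th0 q k tau ->
  forall m, (m <= n)%nat -> forall c, Perm n c ->
  Rel n k c (run_stages Theta n th0 q tau c m) /\ Perm n (run_stages Theta n th0 q tau c m).
Proof.
  intros Hn Hk HP m. induction m as [|m IH]; intros Hm c Hc; simpl.
  - split; [apply Rel_refl|]; exact Hc.
  - destruct (stage_ok Theta n th0 q k tau c (S m) Hn Hk HP Hc ltac:(lia)) as [R1 P1].
    destruct (IH ltac:(lia) _ P1) as [R2 P2].
    split; [exact (Rel_trans _ _ _ _ _ Hc P1 R1 R2)| exact P2].
Qed.

Lemma cfg_ok Theta n dt th0 q k Tb :
  (1 <= n)%nat -> 0 < k -> 0 < dt ->
  (forall tau, 0 <= tau <= Tb -> Pgood Theta n th0 q k tau) ->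
  forall k2, INR k2 * dt <= Tb ->
  Perm n (cfg_at Theta n dt th0 q k2) /\
  forall k1, (k1 <= k2)%nat -> Rel n k (cfg_at Theta n dt th0 q k1) (cfg_at Theta n dt th0 q k2).
Proof.
  intros Hn Hk Hdt HP k2. induction k2 as [|k2 IH]; intros Hk2.
  - assert (P0 : Perm n (cfg_at Theta n dt th0 q 0)).
    { simpl. split; [|split]; simpl; auto. intros p Hp; exists p; auto. }
    split; [exact P0|]. intros k1 Hk1. replace k1 with 0%nat by lia. apply Rel_refl; exact P0.
  - assert (Hk2' : INR k2 * dt <= Tb).
    { rewrite S_INR in Hk2. lra. }
    destruct (IH Hk2') as [P1 R1].
    assert (Ht : 0 <= INR (S k2) * dt <= Tb).
    { split; [|exact Hk2]. apply Rmult_le_pos; [apply pos_INR| lra]. }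
    destruct (run_ok Theta n th0 q k (INR (S k2) * dt) Hn Hk (HP _ Ht) n (le_n n) _ P1) as [R2 P2].
    change (cfg_at Theta n dt th0 q (S k2)) with
      (run_stages Theta n th0 q (INR (S k2) * dt) (cfg_at Theta n dt th0 q k2) n).
    split; [exact P2|].
    intros k1 Hk1. destruct (Nat.eq_dec k1 (S k2)) as [->|Hne].
    + apply Rel_refl; exact P2.
    + eapply Rel_trans; [| exact P1 | apply R1; lia | exact R2].
      destruct (IH Hk2') as [_ _]. 
      assert (Hk1' : INR k1 * dt <= Tb).
      { assert (INR k1 <= INR k2) by (apply le_INR; lia).
        assert (INR k1 * dt <= INR k2 * dt) by (apply Rmult_le_compat_r; lra). lra. }
      clear -Hk1' Hn Hk Hdt HP.
      revert Hk1'. induction k1 as [|k1 IH1]; intros Hk1'.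
      * simpl. split; [|split]; simpl; auto. intros p Hp; exists p; auto.
      * assert (Hk1'' : INR k1 * dt <= Tb) by (rewrite S_INR in Hk1'; lra).
        assert (Ht : 0 <= INR (S k1) * dt <= Tb).
        { split; [|exact Hk1']. apply Rmult_le_pos; [apply pos_INR| lra]. }
        exact (proj2 (run_ok Theta n th0 q k _ Hn Hk (HP _ Ht) n (le_n n) _ (IH1 Hk1''))).
Qed.

Lemma alpha_ok n c j : Perm n c -> (1 <= j <= n)%nat ->
  (1 <= alpha n c j <= n)%nat /\ par c (alpha n c j) = j.
Proof.
  intros [_ [_ Hs]] Hj. destruct (Hs j Hj) as [i0 [Hi0 E0]].
  unfold alpha.
  assert (G : forall l, (exists i, In i l /\ par c i = j) ->
     In (fold_right (fun i acc => if (par c i =? j)%nat then i else acc) 0%nat l) l /\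
     par c (fold_right (fun i acc => if (par c i =? j)%nat then i else acc) 0%nat l) = j).
  { induction l as [|a l IH]; intros [i [Hi Ei]]; [destruct Hi|]. simpl.
    destruct (Nat.eqb_spec (par c a) j).
    - split; [left; reflexivity| assumption].
    - destruct Hi as [<-|Hi]; [contradiction|].
      destruct (IH (ex_intro _ i (conj Hi Ei))) as [A B]. split; [right; exact A| exact B]. }
  destruct (G (seq 1 n)) as [A B].
  { exists i0. split; [apply in_seq; lia| exact E0]. }
  apply in_seq in A. split; [lia| exact B].
Qed.

Lemma cell_ok n z : (1 <= n)%nat -> 0 <= z < 1 ->
  (1 <= cell n z <= n)%nat /\
  forall a, (1 <= a <= n)%nat -> cell n (z - zpos n (cell n z) + zpos n a) = a.
Proof.
  intros Hn Hz. unfold cell.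
  assert (HN : 0 < INR n) by (apply lt_0_INR; lia).
  set (I := Int_part (INR n * z)).
  destruct (base_Int_part (INR n * z)) as [B1 B2]. fold I in B1, B2.
  assert (HI0 : (0 <= I)%Z).
  { assert (-1 < IZR I) by nra. apply lt_IZR in H. lia. }
  assert (HIn : (I < Z.of_nat n)%Z).
  { apply lt_IZR. rewrite <- INR_IZR_INZ. nra. }
  split; [lia|].
  intros a Ha.
  assert (EJ : INR (S (Z.to_nat I)) = IZR I + 1).
  { rewrite S_INR, INR_IZR_INZ, Z2Nat.id by lia. reflexivity. }
  unfold zpos. rewrite EJ.
  replace (INR n * (z - (IZR I + 1) / INR n + INR a / INR n))
    with (INR n * z - IZR I - 1 + INR a) by (field; lra).
  rewrite <- (Int_part_spec _ (Z.of_nat a - 1)).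
  - lia.
  - rewrite minus_IZR, <- INR_IZR_INZ. simpl. lra.
Qed.

Lemma kidx_ok dt s t : 0 < dt -> 0 <= s -> s < t ->
  (kidx dt s <= kidx dt t)%nat /\ INR (kidx dt t) * dt <= t.
Proof.
  intros Hdt Hs Hst. unfold kidx.
  destruct (base_Int_part (s / dt)) as [S1 S2].
  destruct (base_Int_part (t / dt)) as [T1 T2].
  assert (Hsd : 0 <= s / dt) by (apply Rdiv_le_0_compat; lra).
  assert (Hst' : s / dt < t / dt) by (apply Rmult_lt_compat_r; [apply Rinv_0_lt_compat|]; lra).
  assert (A0 : (0 <= Int_part (s / dt))%Z).
  { assert (-1 < IZR (Int_part (s / dt))) by lra. apply lt_IZR in H. lia. }
  assert (A1 : (0 <= Int_part (t / dt))%Z).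
  { assert (-1 < IZR (Int_part (t / dt))) by lra. apply lt_IZR in H. lia. }
  assert (A2 : (Int_part (s / dt) < Int_part (t / dt) + 1)%Z).
  { apply lt_IZR. rewrite plus_IZR. simpl. lra. }
  split; [lia|].
  rewrite INR_IZR_INZ, Z2Nat.id by lia.
  apply (Rmult_le_reg_r (/ dt)); [apply Rinv_0_lt_compat; lra|].
  replace (IZR (Int_part (t / dt)) * dt * / dt) with (IZR (Int_part (t / dt))) by (field; lra).
  exact T1.
Qed.

Lemma fold_Rmax_ge x l : In x l -> x <= fold_right Rmax 0 l.
Proof.
  induction l as [|a l IH]; simpl; [tauto|]. intros [<-|H].
  - apply Rmax_l.
  - eapply Rle_trans; [apply IH; exact H| apply Rmax_r].
Qed.

Lemma thM_bound n th0 q p : (1 <= p <= n)%nat -> Rabs (thM th0 q p) <= Mprime n th0 q.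
Proof.
  intros Hp. unfold thM, Mprime.
  assert (Hin : In p (seq 1 n)) by (apply in_seq; lia).
  pose proof (fold_Rmax_ge (Rabs (th0 p)) (map (fun j => Rabs (th0 j)) (seq 1 n))
    (in_map (fun j => Rabs (th0 j)) _ _ Hin)).
  pose proof (fold_Rmax_ge (Rabs (q p)) (map (fun j => Rabs (q j)) (seq 1 n))
    (in_map (fun j => Rabs (q j)) _ _ Hin)).
  pose proof (Rabs_triang (th0 p) (q p)). lra.
Qed.

Lemma final_ineq k X Y : 0 < k -> Rmax 0 (k * X) <= Y -> Rmax 0 X <= 1 / k * Y.
Proof.
  intros Hk H. pose proof (Rmax_l 0 (k * X)). pose proof (Rmax_r 0 (k * X)).
  apply Rmax_lub.
  - apply Rmult_le_pos; [left; apply Rdiv_lt_0_compat; lra| lra].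
  - apply (Rmult_le_reg_l k); [exact Hk|].
    replace (k * (1 / k * Y)) with Y by (field; lra). lra.
Qed.
Theorem lemma4p13 (Q Theta : R -> R -> R -> R)
  (HQ : smooth3 Q)
  (HQth : forall th z t, Derive (fun a => Q a z t) th > 0)
  (HQz : forall th z t, Derive (fun a => Q th a t) z < 0)
  (HTheta : forall w z t, Theta w z t + Q (Theta w z t) z t = w)
  (HThw : forall w z t, exists d, is_derive (fun a => Theta a z t) w d /\ 0 < d)
  (HThz : forall w z t, exists d, is_derive (fun a => Theta w a t) z d /\ 0 < d)
  (T M' : R) (HT : 0 < T) :
  exists C : R, 0 < C /\
    forall (n : nat) (dt : R) (th0 q : nat -> R),
      (1 <= n)%nat -> 0 < dt ->
      (forall j, (1 <= j)%nat -> (j < n)%nat -> th0 j <= th0 (S j)) ->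
      (forall j, (1 <= j)%nat -> (j <= n)%nat -> q j <= Q (th0 j) (zpos n j) 0) ->
      Mprime n th0 q = M' ->
      forall s t z, 0 <= s -> s < t -> t < T -> 0 <= z < 1 ->
        Rmax 0 (F_n Theta n dt th0 q t z - F_n Theta n dt th0 q s z)
        <= C * (theta_hat Theta n dt th0 q t z - theta_hat Theta n dt th0 q s z).
Proof.
  destruct (theta_lip Q Theta HQ HQth HQz HTheta T M') as [k [Hk Hlip]].
  exists (1 / k). split; [apply Rdiv_lt_0_compat; lra|].
  intros n dt th0 q Hn Hdt _ _ HM s t z Hs Hst HtT Hz.
  assert (HP : forall tau, 0 <= tau <= T -> Pgood Theta n th0 q k tau).
  { intros tau Htau p i1 i2 Hp Hi1 Hi12 Hi2.
    apply Hlip.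
    - rewrite <- HM. apply thM_bound; exact Hp.
    - split; [| apply zpos_le; auto].
      pose proof (zpos_le n 0 i1 Hn ltac:(lia)). unfold zpos in *. simpl in *.
      replace (0 / INR n) with 0 in * by (unfold Rdiv; ring). exact H.
    - pose proof (zpos_le n i2 n Hn Hi2). unfold zpos in *.
      replace (INR n / INR n) with 1 in * by (field; apply not_0_INR; lia). exact H.
    - exact Htau. }
  destruct (kidx_ok dt s t Hdt Hs Hst) as [K12 Kt].
  destruct (cfg_ok Theta n dt th0 q k T Hn Hk Hdt HP (kidx dt t) ltac:(lra)) as [P2 R12].
  assert (Ks : INR (kidx dt s) * dt <= T).
  { assert (INR (kidx dt s) <= INR (kidx dt t)) by (apply le_INR; exact K12).
    assert (INR (kidx dt s) * dt <= INR (kidx dt t) * dt) by (apply Rmult_le_compat_r; lra). lra. }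
  destruct (cfg_ok Theta n dt th0 q k T Hn Hk Hdt HP (kidx dt s) Ks) as [P1 _].
  pose proof (R12 (kidx dt s) K12) as Rl.
  destruct (cell_ok n z Hn Hz) as [Hj Hc].
  destruct (alpha_ok n _ (cell n z) P1 Hj) as [A1 E1].
  destruct (alpha_ok n _ (cell n z) P2 Hj) as [A2 E2].
  unfold theta_hat, theta_n, F_n.
  rewrite (Hc _ A1), (Hc _ A2).
  apply final_ineq; [exact Hk|].
  replace (z - zpos n (cell n z) + zpos n (alpha n (cfg_at Theta n dt th0 q (kidx dt t)) (cell n z)) -
     (z - zpos n (cell n z) + zpos n (alpha n (cfg_at Theta n dt th0 q (kidx dt s)) (cell n z))))
    with (zpos n (alpha n (cfg_at Theta n dt th0 q (kidx dt t)) (cell n z)) -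
          zpos n (alpha n (cfg_at Theta n dt th0 q (kidx dt s)) (cell n z))) by ring.
  apply Rl; auto. rewrite E1, E2. reflexivity.
Qed.
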